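(* The $\mathfrak{gl}_{1|1}[t]$-module $\mathcal V^S$ is cyclic, generated by $v_1^{\otimes n}=v_1\otimes\cdots\otimes v_1$.
   Context: $\mathbb{C}^{1|1}$ has basis $v_1$ (even), $v_2$ (odd), $|1|=\bar0,|2|=\bar1$; $\mathfrak{gl}_{1|1}$ has basis $e_{ij}$ of parity $|i|+|j|$, acting by $e_{ij}v_r=\delta_{jr}v_i$. $\mathfrak{gl}_{1|1}[t]=\mathfrak{gl}_{1|1}\otimes\mathbb{C}[t]$ with basis $e_{ij}[r]=e_{ij}\otimes t^r$ and pointwise supercommutator. $\mathcal V=(\mathbb{C}^{1|1})^{\otimes n}\otimes\mathbb{C}[z_1,\dots,z_n]$ is a $\mathfrak{gl}_{1|1}[t]$-module via $e_{ij}[r](p\,w_1\otimes\cdots\otimes w_n)=p\sum_{s=1}^n(-1)^{(|w_1|+\cdots+|w_{s-1}|)(|i|+|j|)}z_s^r\,w_1\otimes\cdots\otimes e_{ij}w_s\otimes\cdots\otimes w_n$ for $p\in\mathbb{C}[\boldsymbol z]$ and homogeneous $w_s$. The standard $\mathfrak S_n$-action is $s_i:\boldsymbol f(\dots,z_i,z_{i+1},\dots)\mapsto P^{(i,i+1)}\boldsymbol f(\dots,z_{i+1},z_i,\dots)$ with $P^{(i,i+1)}$ the graded flip of factors $i,i+1$; $\mathcal V^S$ is its invariant subspace, which is a $\mathfrak{gl}_{1|1}[t]$-submodule. *)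

(* Defs.v *)
From HB Require Import structures.
From mathcomp Require Import all_boot all_order all_algebra all_fingroup.
From mathcomp Require Import mpoly.
Set Implicit Arguments. Unset Strict Implicit. Unset Printing Implicit Defensive.
Import GRing.Theory.
Local Open Scope ring_scope.

(* Index/parity of the basis of C^{1|1}: a boolean b, with
     false <-> v_1 (even, |1| = 0),  true <-> v_2 (odd, |2| = 1).
   So the parity of v_b is b itself, and |i|+|j| mod 2 is (i (+) j).
   A basis vector v_{b_1} (x) ... (x) v_{b_n} of (C^{1|1})^{(x) n} is indexed by
   b : {ffun 'I_n -> bool}.  An element of V = (C^{1|1})^{(x) n} (x) C[z_1..z_n]
   is its coefficient function  f : {ffun 'I_n -> bool} -> {mpoly C[n]},
   i.e. f = \sum_b f b . v_{b_1} (x) ... (x) v_{b_n}. *)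

Definition basisIdx (n : nat) := {ffun 'I_n -> bool}.
Definition Vsp (C : numClosedFieldType) (n : nat) :=
  {ffun basisIdx n -> {mpoly C[n]}}.

Definition parity_before n (b : basisIdx n) (s : 'I_n) : nat :=
  #|[set k : 'I_n | (k < s)%N && b k]|.

Definition upd n (b : basisIdx n) (s : 'I_n) (x : bool) : basisIdx n :=
  [ffun k => if k == s then x else b k].

(* Action of e_{ij}[r] on V (i, j given as parities/indices, see above):
   e_{ij}[r] (p w_1 (x) ... (x) w_n) =
     p \sum_s (-1)^{(|w_1|+...+|w_{s-1}|)(|i|+|j|)} z_s^r w_1 (x) ... e_{ij} w_s ... w_n,
   with e_{ij} v_r = delta_{jr} v_i.  On coefficient functions this reads
   (e_{ij}[r] f)(b') = \sum_s [b'_s = i] (-1)^{(...)(|i|+|j|)} z_s^r f(b' with b'_s := j). *)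
Definition act (C : numClosedFieldType) n (i j : bool) (r : nat)
  (f : Vsp C n) : Vsp C n :=
  [ffun b' : basisIdx n =>
     \sum_(s < n)
       (if b' s == i then
          ((-1) ^+ (parity_before b' s * (i (+) j)) * 'X_s ^+ r) * f (upd b' s j)
        else 0)].

Definition swapIdx n (p q : 'I_n) (b : basisIdx n) : basisIdx n :=
  [ffun k => b (tperm p q k)].

(* Standard action of the transposition s_p = (p, p+1) (q = p+1):
   s_p : f(.., z_p, z_q, ..) |-> P^{(p,q)} f(.., z_q, z_p, ..),
   with P the graded flip: P (.. w_p (x) w_q ..) = (-1)^{|w_p||w_q|} (.. w_q (x) w_p ..). *)
Definition sact (C : numClosedFieldType) n (p q : 'I_n) (f : Vsp C n) : Vsp C n :=
  [ffun b' : basisIdx n =>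
     (-1) ^+ (b' p && b' q) * msym (tperm p q) (f (swapIdx p q b'))].

(* V^S : invariants under all simple transpositions s_p, p = 1..n-1 *)
Definition symmetric_vec (C : numClosedFieldType) n (f : Vsp C n) : Prop :=
  forall p q : 'I_n, val q = (val p).+1 -> sact p q f = f.

Definition v1tensor (C : numClosedFieldType) n : Vsp C n :=
  [ffun b : basisIdx n => if b == [ffun => false] then 1 else 0].

(* The gl_{1|1}[t]-submodule generated by v, i.e. U(gl_{1|1}[t]) v :
   the smallest C-subspace of V containing v and stable under all e_{ij}[r]. *)
Inductive gen_submod (C : numClosedFieldType) n (v : Vsp C n) : Vsp C n -> Prop :=
  | gen_base : gen_submod v v
  | gen_zero : gen_submod v 0
  | gen_add f g : gen_submod v f -> gen_submod v g -> gen_submod v (f + g)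
  | gen_scale (c : C) f : gen_submod v f -> gen_submod v [ffun b => c *: f b]
  | gen_act (i j : bool) (r : nat) f : gen_submod v f -> gen_submod v (act i j r f).

(* Main.v *)
Set Warnings "-notation-overridden -ambiguous-paths -notation-incompatible-prefix".
Require Import Defs.
From HB Require Import structures.
From mathcomp Require Import all_boot all_order all_algebra all_fingroup.
From mathcomp Require Import mpoly.
Set Implicit Arguments. Unset Strict Implicit. Unset Printing Implicit Defensive.
Import GRing.Theory.
Local Open Scope ring_scope.
Lemma msymXi (C : numClosedFieldType) n (s : 'S_n) (i : 'I_n) :
  msym s ('X_i : {mpoly C[n]}) = 'X_(s i).
Proof. by rewrite /msym mmapX mmap1U. Qed.

Definition cmp n (b : basisIdx n) (s : 'S_n) : basisIdx n := [ffun k => b (s k)].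
Definition hrev n (s : 'S_n) (A : {set 'I_n}) : bool :=
  [exists i in A, exists j in A, (i < j)%N && (s j < s i)%N].
Definition sgnE (C : numClosedFieldType) n (s : 'S_n) (c : basisIdx n) : C :=
  \prod_(A : {set 'I_n})
     (if [&& #|A| == 2, A \subset [set k | c k] & hrev s A] then -1 else 1).
Definition pact (C : numClosedFieldType) n (s : 'S_n) (f : Vsp C n) : Vsp C n :=
  [ffun b => sgnE C s (cmp b s) *: msym s (f (cmp b s))].

Lemma hrev2 n (s : 'S_n) (i j : 'I_n) : i != j ->
  hrev s [set i; j] = ((i < j)%N != (s i < s j)%N).
Proof.
move=> ij; have sij : s i != s j by rewrite (inj_eq perm_inj).
apply/existsP/idP.
- case=> x /andP[xA /existsP[y /andP[yA /andP[xy syx]]]].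
  move: xA yA xy syx; rewrite !inE => /orP[]/eqP-> /orP[]/eqP-> //=;
    try by rewrite ltnn.
  + by move=> xy syx; rewrite xy ltnNge (ltnW syx).
  + by move=> xy syx; rewrite ltnNge (ltnW xy) syx.
- have [lij|lji|eij] := ltngtP i j.
  + move=> /= sl; exists i; rewrite !inE eqxx /=.
    apply/existsP; exists j; rewrite !inE eqxx orbT lij /=.
    by rewrite ltn_neqAle eq_sym sij leqNgt.
  + move=> /= sl; exists j; rewrite !inE eqxx orbT /=.
    apply/existsP; exists i; rewrite !inE eqxx lji /=.
    by case: (s i < s j)%N sl.
  + by move: ij; rewrite (val_inj eij) eqxx.
Qed.

Lemma hrevM n (t s : 'S_n) (A : {set 'I_n}) : #|A| == 2 ->
  hrev (t * s)%g A = hrev t A (+) hrev s (t @: A).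
Proof.
case/cards2P=> i [j [ij ->]].
have tij : t i != t j by rewrite (inj_eq perm_inj).
rewrite imsetU1 imset_set1 !hrev2 // !permM.
by case: (i < j)%N; case: (t i < t j)%N; case: (s (t i) < s (t j))%N.
Qed.

Lemma sgnE_mul (C : numClosedFieldType) n (t s : 'S_n) (d : basisIdx n) :
  sgnE C (t * s)%g (cmp d t) = sgnE C t (cmp d t) * sgnE C s d.
Proof.
rewrite /sgnE [X in _ = _ * X](reindex_inj (imset_inj (@perm_inj _ t))) -big_split /=.
apply: eq_bigr => A _.
have -> : (t @: A \subset [set k | d k]) = (A \subset [set k | cmp d t k]).
  apply/subsetP/subsetP => H x xA.
  - by rewrite inE ffunE; have := H _ (imset_f t xA); rewrite inE.
  - by case/imsetP: xA => y yA ->; have := H _ yA; rewrite !inE ffunE.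
rewrite card_imset; last exact: perm_inj.
case: (boolP (#|A| == 2)) => //= A2; last by rewrite mulr1.
rewrite hrevM //.
case: (A \subset _) => /=; last by rewrite mulr1.
by case: (hrev t A); case: (hrev s _); rewrite /= ?mulN1r ?opprK ?mulr1 ?mul1r.
Qed.

Lemma sgnE1 (C : numClosedFieldType) n (c : basisIdx n) : sgnE C 1%g c = 1.
Proof.
rewrite /sgnE big1 // => A _.
have -> : hrev 1%g A = false.
  apply/negbTE/existsP => [[x /andP[_ /existsP[y /andP[_ /andP[xy]]]]]].
  by rewrite !perm1 ltnNge (ltnW xy).
by rewrite !andbF.
Qed.

Lemma sgnE_sq (C : numClosedFieldType) n (s : 'S_n) (c : basisIdx n) :
  sgnE C s c * sgnE C s c = 1.
Proof.
rewrite /sgnE -big_split big1 // => A _ /=.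
by case: ifP => _; rewrite ?mulN1r ?opprK ?mulr1.
Qed.

Lemma cmpM n (b : basisIdx n) (s t : 'S_n) : cmp (cmp b s) t = cmp b (t * s)%g.
Proof. by apply/ffunP => k; rewrite !ffunE permM. Qed.

Lemma cmp1 n (b : basisIdx n) : cmp b 1%g = b.
Proof. by apply/ffunP => k; rewrite !ffunE perm1. Qed.

Lemma pactM (C : numClosedFieldType) n (s t : 'S_n) (f : Vsp C n) :
  pact s (pact t f) = pact (t * s)%g f.
Proof.
apply/ffunP => b; rewrite !ffunE msymZ scalerA cmpM -msymMm.
by congr (_ *: _); rewrite -cmpM sgnE_mul mulrC.
Qed.

Lemma pact1 (C : numClosedFieldType) n (f : Vsp C n) : pact 1%g f = f.
Proof. by apply/ffunP => b; rewrite !ffunE cmp1 sgnE1 scale1r msym1m. Qed.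

Lemma pactD (C : numClosedFieldType) n (s : 'S_n) (f g : Vsp C n) :
  pact s (f + g) = pact s f + pact s g.
Proof. by apply/ffunP => b; rewrite !ffunE msymD scalerDr. Qed.

Lemma pact0 (C : numClosedFieldType) n (s : 'S_n) : pact s (0 : Vsp C n) = 0.
Proof. by apply/ffunP => b; rewrite !ffunE msym0 scaler0. Qed.

Lemma pactZ (C : numClosedFieldType) n (s : 'S_n) (c : C) (f : Vsp C n) :
  pact s (c *: f) = c *: pact s f.
Proof. by apply/ffunP => b; rewrite !ffunE msymZ !scalerA mulrC. Qed.

Lemma pact_sum (C : numClosedFieldType) n (s : 'S_n) I (r : seq I) (P : pred I)
  (F : I -> Vsp C n) :
  pact s (\sum_(i <- r | P i) F i) = \sum_(i <- r | P i) pact s (F i).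
Proof. exact: (big_morph _ (pactD s) (pact0 C s)). Qed.
From mathcomp Require Import zify.
Lemma adj_rev n (p q i j : 'I_n) : val q = (val p).+1 -> i != j ->
  ((i < j)%N != (tperm p q i < tperm p q j)%N) ->
  (i == p) && (j == q) || (i == q) && (j == p).
Proof.
move=> hq ij.
case: (tpermP p q i) => [->|->|/eqP ei1 /eqP ei2];
  case: (tpermP p q j) => [->|->|/eqP ej1 /eqP ej2];
  move: ij; try move: ei1 ei2; try move: ej1 ej2;
  rewrite ?eqxx; repeat rewrite -[(_ == _ :> 'I_n)](inj_eq val_inj); rewrite /= ?hq; try lia;
  do 2 (case: ltnP => /= ?); lia.
Qed.
Lemma sgnE_adj (C : numClosedFieldType) n (p q : 'I_n) (c : basisIdx n) :
  val q = (val p).+1 -> sgnE C (tperm p q) c = if c p && c q then -1 else 1.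
Proof.
move=> hq; have pq : p != q by rewrite -(inj_eq val_inj) hq (ltn_eqF (ltnSn _)).
rewrite /sgnE (bigD1 [set p; q]) //= big1 => [|A nA].
  rewrite cards2 pq /= subUset !sub1set !inE hrev2 // tpermL tpermR.
  rewrite hq ltnSn /= ltnNge leqnSn /= mulr1.
  by case: (c p && c q).
case: ifP => // /and3P[/cards2P[i [j [ij eA]]] _ hr].
move: hr nA; rewrite eA hrev2 // => /(adj_rev hq ij) /orP[]/andP[/eqP-> /eqP->].
  by rewrite eqxx.
by rewrite setUC eqxx.
Qed.

Lemma sgnE_tperm_triv (C : numClosedFieldType) n (u t : 'I_n) (c : basisIdx n) :
  (u <= t)%N -> (forall k : 'I_n, (u < k)%N -> c k = false) ->
  sgnE C (tperm u t) c = 1.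
Proof.
move=> ut hc; rewrite /sgnE big1 // => A _.
case: ifP => // /and3P[/cards2P[i [j [ij eA]]] sA hr]; exfalso.
move: sA hr; rewrite eA subUset !sub1set !inE hrev2 // => /andP[ci cj] hr.
have iu : (i <= u)%N by rewrite leqNgt; apply/negP => /hc; rewrite ci.
have ju : (j <= u)%N by rewrite leqNgt; apply/negP => /hc; rewrite cj.
move: hr ij iu ju ut.
case: (tpermP u t i) => [->|->|/eqP ei1 /eqP ei2];
  case: (tpermP u t j) => [->|->|/eqP ej1 /eqP ej2];
  try move: ei1 ei2; try move: ej1 ej2;
  rewrite ?eqxx; repeat rewrite -[(_ == _ :> 'I_n)](inj_eq val_inj); rewrite /=; try lia;
  do 2 (case: ltnP => /= ?); lia.
Qed.

Lemma pact_adj (C : numClosedFieldType) n (p q : 'I_n) (f : Vsp C n) :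
  val q = (val p).+1 -> pact (tperm p q) f = sact p q f.
Proof.
move=> hq; apply/ffunP => b; rewrite !ffunE sgnE_adj // !ffunE.
have -> : cmp b (tperm p q) = swapIdx p q b by [].
rewrite tpermL tpermR andbC.
by case: (b p && b q); rewrite ?expr1 ?expr0 ?mulN1r ?mul1r ?scaleN1r ?scale1r.
Qed.
Lemma perm_gen n (P : 'S_n -> Prop) : P 1%g ->
  (forall s t, P s -> P t -> P (s * t)%g) ->
  (forall p q : 'I_n, val q = (val p).+1 -> P (tperm p q)) -> forall s, P s.
Proof.
move=> P1 PM Padj.
have Pd : forall d (u t : 'I_n), (t : nat) = (u + d.+1)%N -> P (tperm u t).
  elim=> [|d IH] u t ht; first by apply: Padj; exact: (etrans ht (addn1 _)).
  have t'lt : (u + d.+1 < n)%N by move: (ltn_ord t); rewrite ht; lia.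
  pose t' := Ordinal t'lt.
  have -> : tperm u t = (tperm t' t * tperm u t' * tperm t' t)%g.
    rewrite -{1}(tpermV t' t) -mulgA -conjgE tpermJ tpermL tpermD //;
      rewrite -(inj_eq val_inj) /= ?ht; lia.
  have Pt't : P (tperm t' t) by apply Padj; exact: (etrans ht (addnS _ _)).
  apply PM => //; apply PM => //; exact: IH.
have Pt : forall u t : 'I_n, P (tperm u t).
  move=> u t; have [ut|tu|/val_inj->] := ltngtP u t; last by rewrite tperm1.
    by apply: (Pd (t - u.+1)%N); lia.
  by rewrite tpermC; apply: (Pd (u - t.+1)%N); lia.
move=> s; have [ts -> _] := prod_tpermP s.
elim: ts => [|x ts IH]; first by rewrite big_nil.
by rewrite big_cons; apply PM.
Qed.
Lemma pb_sum n (b : basisIdx n) (s : 'I_n) :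
  parity_before b s = \sum_(k < n | (k < s)%N) (b k : nat).
Proof.
rewrite /parity_before -sum1_card big_mkcond [RHS]big_mkcond /=.
by apply: eq_bigr => k _; rewrite inE; case: (k < s)%N; case: (b k).
Qed.

Lemma pb_q n (b : basisIdx n) (p q : 'I_n) : val q = (val p).+1 ->
  parity_before b q = (parity_before b p + b p)%N.
Proof.
move=> hq; rewrite !pb_sum (bigD1 p) /=; last by rewrite -[val q]/(nat_of_ord q) hq.
rewrite addnC; congr (_ + _)%N; apply: eq_bigl => k.
rewrite -(inj_eq val_inj) -[val q]/(nat_of_ord q) hq /=.
by rewrite ltnS ltn_neqAle andbC.
Qed.

Lemma pb_swap n (b : basisIdx n) (p q s : 'I_n) : val q = (val p).+1 ->
  parity_before (swapIdx p q b) s =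
  if s == q then (parity_before b p + b q)%N else parity_before b s.
Proof.
move=> hq; rewrite !pb_sum.
rewrite (reindex_inj (@perm_inj _ (tperm p q))) /=.
under eq_bigr do rewrite ffunE tpermK.
have pq : p != q by rewrite -(inj_eq val_inj) hq (ltn_eqF (ltnSn _)).
case: eqP => [->|/eqP sq].
  rewrite (bigD1 q) /= ?tpermR; last by rewrite -[val q]/(nat_of_ord q) hq.
  rewrite addnC; congr (_ + _)%N; apply: eq_bigl => k.
  move: pq; case: (tpermP p q k) => [->|->|/eqP e1 /eqP e2];
  try move: e1 e2; rewrite ?eqxx; repeat rewrite -[(_ == _ :> 'I_n)](inj_eq val_inj);
  rewrite /= -?[val q]/(nat_of_ord q) ?hq ?ltnn ?ltnSn //=; try lia;
  do 2 (case: ltnP => /= ?); lia.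
apply: eq_bigl => k.
move: pq sq; case: (tpermP p q k) => [->|->|/eqP e1 /eqP e2];
  try move: e1 e2; rewrite ?eqxx; repeat rewrite -[(_ == _ :> 'I_n)](inj_eq val_inj);
  rewrite /= -?[val q]/(nat_of_ord q) ?hq //=; try lia;
  do 2 (case: ltnP => /= ?); lia.
Qed.
Lemma upd_swap n (b : basisIdx n) (p q s : 'I_n) j :
  upd (swapIdx p q b) s j = swapIdx p q (upd b (tperm p q s) j).
Proof. by apply/ffunP => k; rewrite !ffunE (inj_eq perm_inj). Qed.

Lemma msymXn (C : numClosedFieldType) n (s : 'S_n) (i : 'I_n) r :
  msym s ('X_i ^+ r : {mpoly C[n]}) = 'X_(s i) ^+ r.
Proof. by rewrite rmorphXn /= msymXi. Qed.

Lemma msymS (C : numClosedFieldType) n (s : 'S_n) k :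
  msym s ((-1) ^+ k : {mpoly C[n]}) = (-1) ^+ k.
Proof. by rewrite rmorphXn rmorphN1. Qed.

Lemma sgn_odd (R : pzRingType) a b : odd a = odd b -> (-1) ^+ a = (-1) ^+ b :> R.
Proof. by move=> h; rewrite -signr_odd h signr_odd. Qed.

Lemma act_sact (C : numClosedFieldType) n i j r (p q : 'I_n) (f : Vsp C n) :
  val q = (val p).+1 -> Defs.act i j r (sact p q f) = sact p q (Defs.act i j r f).
Proof.
move=> hq; apply/ffunP => b; rewrite !ffunE raddf_sum mulr_sumr.
rewrite (reindex_inj (@perm_inj _ (tperm p q))) /=.
apply: eq_bigr => s _; rewrite !ffunE.
case: eqP => bi; last by rewrite msym0 mulr0.
rewrite !msymM msymXn msymS -upd_swap !mulrA (mulrAC _ ('X_ _ ^+ r)); congr (_ * _ * _).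
rewrite -!exprD; apply: sgn_odd.
have pq : p != q by rewrite -(inj_eq val_inj) hq (ltn_eqF (ltnSn _)).
rewrite pb_swap //.
case: (tpermP p q s) bi => [->|->|/eqP e1 /eqP e2] bi.
- rewrite (negbTE pq) eqxx (pb_q _ hq) bi !oddD !oddM !oddD.
  by case: (b p); case: (b q) bi => <-; case: j; case: (odd (parity_before b p)).
- rewrite [q == p]eq_sym (negbTE pq) !eqxx !oddD !oddM !oddD.
  by case: (b q); case: (b p) bi => <-; case: j; case: (odd (parity_before b p)).
- rewrite [p == s]eq_sym [q == s]eq_sym (negbTE e1) (negbTE e2) addnC.
  by [].
Qed.
Lemma v1_sym (C : numClosedFieldType) n : symmetric_vec (v1tensor C n).
Proof.
move=> p q hq; apply/ffunP => b; rewrite !ffunE.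
have -> : (swapIdx p q b == [ffun => false]) = (b == [ffun => false]).
  apply/eqP/eqP => H; apply/ffunP => k.
    by have := congr1 (fun g : basisIdx n => g (tperm p q k)) H; rewrite !ffunE tpermK.
  by rewrite !ffunE H ffunE.
case: eqP => [->|_]; last by rewrite msym0 mulr0.
by rewrite !ffunE /= expr0 mul1r msym1.
Qed.

Lemma sym_of_gen (C : numClosedFieldType) n (f : Vsp C n) :
  gen_submod (v1tensor C n) f -> symmetric_vec f.
Proof.
elim => [|| f1 g _ Hf _ Hg | c f1 _ Hf | i j r f1 _ Hf].
- exact: v1_sym.
- by move=> p q hq; apply/ffunP => b; rewrite !ffunE msym0 mulr0.
- move=> p q hq; apply/ffunP => b.
  have := congr1 (fun h : Vsp C n => h b) (Hf p q hq); have := congr1 (fun h : Vsp C n => h b) (Hg p q hq).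
  by rewrite !ffunE msymD mulrDr => -> ->.
- move=> p q hq; apply/ffunP => b.
  have := congr1 (fun h : Vsp C n => h b) (Hf p q hq).
  by rewrite !ffunE msymZ -scalerAr => ->.
- by move=> p q hq; rewrite -act_sact // Hf.
Qed.
Lemma sym_fix (C : numClosedFieldType) n (f : Vsp C n) :
  symmetric_vec f -> forall s, pact s f = f.
Proof.
move=> Hf; apply: perm_gen; first exact: pact1.
  by move=> s t Hs Ht; rewrite -pactM Hs Ht.
by move=> p q hq; rewrite pact_adj // Hf.
Qed.

Lemma actD (C : numClosedFieldType) n i j r (f g : Vsp C n) :
  Defs.act i j r (f + g) = Defs.act i j r f + Defs.act i j r g.
Proof.
apply/ffunP => b; rewrite !ffunE -big_split /=; apply: eq_bigr => s _.
by rewrite !ffunE; case: ifP; rewrite ?mulrDr ?addr0.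
Qed.

Lemma act0 (C : numClosedFieldType) n i j r : Defs.act i j r (0 : Vsp C n) = 0.
Proof.
apply/ffunP => b; rewrite !ffunE big1 // => s _.
by rewrite !ffunE; case: ifP; rewrite ?mulr0.
Qed.

Lemma actZ (C : numClosedFieldType) n i j r (c : C) (f : Vsp C n) :
  Defs.act i j r (c *: f) = c *: Defs.act i j r f.
Proof.
apply/ffunP => b; rewrite !ffunE scaler_sumr; apply: eq_bigr => s _.
by rewrite !ffunE; case: ifP; rewrite ?scaler0 // scalerAr.
Qed.

Lemma act_sum (C : numClosedFieldType) n i j r I (rr : seq I) (P : pred I)
  (F : I -> Vsp C n) :
  Defs.act i j r (\sum_(k <- rr | P k) F k) = \sum_(k <- rr | P k) Defs.act i j r (F k).
Proof. exact: (big_morph _ (@actD C n i j r) (act0 C n i j r)). Qed.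

Lemma act_pact (C : numClosedFieldType) n i j r (s : 'S_n) (f : Vsp C n) :
  Defs.act i j r (pact s f) = pact s (Defs.act i j r f).
Proof.
move: s f; apply: perm_gen.
- by move=> f; rewrite !pact1.
- by move=> s t Hs Ht f; rewrite -!pactM Ht Hs.
- by move=> p q hq f; rewrite !pact_adj // act_sact.
Qed.

Definition delta (C : numClosedFieldType) n (b : basisIdx n) (p : {mpoly C[n]}) : Vsp C n :=
  [ffun b' => if b' == b then p else 0].

Definition Yv (C : numClosedFieldType) n (b : basisIdx n) (p : {mpoly C[n]}) : Vsp C n :=
  \sum_(s : 'S_n) pact s (delta b p).

Lemma deltaZ (C : numClosedFieldType) n (b : basisIdx n) (c : C) p :
  delta b (c *: p) = c *: delta b p.
Proof. by apply/ffunP => b'; rewrite !ffunE; case: ifP; rewrite ?scaler0. Qed.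

Lemma deltaD (C : numClosedFieldType) n (b : basisIdx n) (p q : {mpoly C[n]}) :
  delta b (p + q) = delta b p + delta b q.
Proof. by apply/ffunP => b'; rewrite !ffunE; case: ifP; rewrite ?addr0. Qed.

Lemma delta0 (C : numClosedFieldType) n (b : basisIdx n) :
  delta b (0 : {mpoly C[n]}) = 0.
Proof. by apply/ffunP => b'; rewrite !ffunE; case: ifP. Qed.

Lemma pact_delta (C : numClosedFieldType) n (s : 'S_n) (b : basisIdx n) (p : {mpoly C[n]}) :
  pact s (delta b p) = delta (cmp b s^-1) (sgnE C s b *: msym s p).
Proof.
apply/ffunP => b'; rewrite !ffunE.
have -> : (cmp b' s == b) = (b' == cmp b s^-1).
  apply/eqP/eqP => [<-|->]; first by rewrite cmpM mulVg cmp1.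
  by rewrite cmpM mulgV cmp1.
by case: eqP => [->|_]; rewrite ?msym0 ?scaler0 // cmpM mulgV cmp1.
Qed.

Lemma Yv_perm (C : numClosedFieldType) n (pi : 'S_n) (b : basisIdx n) (p : {mpoly C[n]}) :
  Yv (cmp b pi) (msym pi^-1 p) = sgnE C pi^-1 b *: Yv b p.
Proof.
have e : delta (cmp b pi) (msym pi^-1 p) = sgnE C pi^-1 b *: pact pi^-1 (delta b p).
  by rewrite pact_delta invgK deltaZ scalerA sgnE_sq scale1r.
rewrite /Yv e; under eq_bigr do rewrite pactZ pactM.
rewrite -scaler_sumr; congr (_ *: _).
by rewrite [RHS](reindex_inj (mulgI pi^-1)%g).
Qed.
Lemma pb_upd n (b : basisIdx n) (t : 'I_n) x :
  parity_before (upd b t x) t = parity_before b t.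
Proof.
rewrite !pb_sum; apply: eq_bigr => k kt; rewrite ffunE.
have -> : (k == t) = false.
  by apply/negbTE; rewrite -(inj_eq val_inj) neq_ltn kt.
by [].
Qed.

Lemma signZ (C : numClosedFieldType) n k (Y : {mpoly C[n]}) :
  ((-1) ^+ k : C) *: Y = (-1) ^+ k * Y.
Proof. by rewrite -mul_mpolyC rmorphXn rmorphN1. Qed.

Lemma act_delta (C : numClosedFieldType) n x a (b' : basisIdx n) (P : {mpoly C[n]}) :
  Defs.act x false a (delta b' P) =
  \sum_(t : 'I_n | b' t == false)
     delta (upd b' t x) ((-1) ^+ (parity_before b' t * x) *: ('X_t ^+ a * P)).
Proof.
apply/ffunP => c; rewrite !ffunE sum_ffunE [RHS]big_mkcond /=.
apply: eq_bigr => t _; rewrite !ffunE addbF.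
case: (boolP (c == upd b' t x)) => [/eqP-> | ne].
  rewrite ffunE eqxx eqxx.
  case: (boolP (b' t == false)) => bt.
    have -> : upd (upd b' t x) t false = b'.
      by apply/ffunP => k; rewrite !ffunE; case: eqP => [->|]; rewrite ?(eqP bt).
    by rewrite eqxx pb_upd signZ mulrA.
  have -> : (upd (upd b' t x) t false == b') = false.
    apply/negbTE/eqP => H; move: bt; rewrite -H ffunE eqxx.
    by [].
  by rewrite mulr0.
rewrite if_same.
case: eqP => ct //.
case: eqP => eu; last by rewrite mulr0.
exfalso; apply: (negP ne); apply/eqP/ffunP => k; rewrite ffunE.
case: eqP => [->|/eqP kt] //.
by rewrite -eu ffunE (negbTE kt).
Qed.
Definition mon (C : numClosedFieldType) n (u : nat) (e : 'I_n -> nat) : {mpoly C[n]} :=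
  \prod_(k < n | (k < u)%N) 'X_k ^+ e k.

Lemma gen_sum (C : numClosedFieldType) n (v : Vsp C n) I (r : seq I) (P : pred I)
  (F : I -> Vsp C n) :
  (forall i, P i -> gen_submod v (F i)) -> gen_submod v (\sum_(i <- r | P i) F i).
Proof.
move=> H; apply: (big_ind (gen_submod v)) => //; [exact: gen_zero | exact: gen_add].
Qed.

Lemma gen_scaleZ (C : numClosedFieldType) n (v : Vsp C n) (c : C) f :
  gen_submod v f -> gen_submod v (c *: f).
Proof. by move=> H; have := gen_scale c H. Qed.

Lemma gen_sub (C : numClosedFieldType) n (v : Vsp C n) f g :
  gen_submod v f -> gen_submod v g -> gen_submod v (f - g).
Proof. by move=> Hf Hg; apply: gen_add => //; rewrite -scaleN1r; exact: gen_scaleZ. Qed.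

Lemma mon_succ (C : numClosedFieldType) n u e (un : (u < n)%N) :
  mon C u.+1 e = 'X_(Ordinal un) ^+ e (Ordinal un) * mon C u e.
Proof.
rewrite /mon (bigD1 (Ordinal un)) //=; congr (_ * _); apply: eq_bigl => k.
by rewrite -(inj_eq val_inj) /= ltnS ltn_neqAle andbC.
Qed.

Lemma mon_bump (C : numClosedFieldType) n u e (t : 'I_n) a : (t < u)%N ->
  'X_t ^+ a * mon C u e = mon C u (fun k => if k == t then (e k + a)%N else e k).
Proof.
move=> tu; rewrite /mon (bigD1 t) // [RHS](bigD1 t) //= eqxx exprD mulrA.
rewrite [_ * 'X_t ^+ e t]mulrC; congr (_ * _ * _); apply: eq_bigr => k /andP[_ kt].
by rewrite (negbTE kt).
Qed.

Lemma msym_mon (C : numClosedFieldType) n (s : 'S_n) u e :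
  (forall k : 'I_n, (k < u)%N -> s k = k) -> msym s (mon C u e) = mon C u e.
Proof.
move=> hs; rewrite /mon rmorph_prod; apply: eq_bigr => k ku.
by rewrite /= msymXn hs.
Qed.
Lemma pb_const n (b : basisIdx n) (u : nat) (uo t : 'I_n) :
  val uo = u -> (forall k : 'I_n, (u <= k)%N -> b k = false) -> (u <= t)%N ->
  parity_before b t = parity_before b uo.
Proof.
move=> huo hb ut; rewrite !pb_sum big_mkcond [RHS]big_mkcond /=.
apply: eq_bigr => k _; rewrite -[val uo]/(nat_of_ord uo) huo.
case: (ltnP k u) => ku; first by rewrite (leq_trans ku ut).
by rewrite hb //; case: ifP.
Qed.

Lemma Yv_mem (C : numClosedFieldType) n : forall u, (u <= n)%N ->
  forall (b : basisIdx n) e, (forall k : 'I_n, (u <= k)%N -> b k = false) ->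
  gen_submod (v1tensor C n) (Yv b (mon C u e)).
Proof.
elim=> [|u IH] un b e hb.
  have -> : b = [ffun => false] by apply/ffunP => k; rewrite ffunE hb.
  have -> : mon C 0 e = 1 by rewrite /mon big1.
  rewrite /Yv; have -> : delta [ffun => false] (1 : {mpoly C[n]}) = v1tensor C n by [].
  by apply: gen_sum => s _; rewrite sym_fix; [exact: gen_base | exact: v1_sym].
pose uo := Ordinal un.
pose x := b uo; pose a := e uo; pose b' := upd b uo false.
have hb' : forall k : 'I_n, (u <= k)%N -> b' k = false.
  move=> k uk; rewrite ffunE; case: eqP => // /eqP kuo; apply: hb.
  by move: kuo uk; rewrite -(inj_eq val_inj) /=; lia.
have IH' := IH (ltnW un).
pose sg (t : 'I_n) : C := (-1) ^+ (parity_before b' t * x).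
have E : Defs.act x false a (Yv b' (mon C u e)) =
    \sum_(t : 'I_n | b' t == false) sg t *: Yv (upd b' t x) ('X_t ^+ a * mon C u e).
  rewrite /Yv act_sum.
  under eq_bigr do rewrite act_pact act_delta pact_sum.
  rewrite exchange_big /=; apply: eq_bigr => t _.
  rewrite scaler_sumr; apply: eq_bigr => s _.
  by rewrite deltaZ pactZ.
have Kt : forall t : 'I_n, (u <= t)%N ->
    sg t *: Yv (upd b' t x) ('X_t ^+ a * mon C u e) = sg uo *: Yv b (mon C u.+1 e).
  move=> t ut.
  have huo : val uo = u by [].
  rewrite /sg (pb_const huo hb' ut); congr (_ *: _).
  rewrite (mon_succ C e un) -/uo -/a.
  have := Yv_perm (tperm uo t) b ('X_uo ^+ a * mon C u e).
  rewrite tpermV sgnE_tperm_triv ?scale1r => [<-| // | ]; last first.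
    by move=> k uk; exact: (hb k uk).
  congr Yv.
    apply/ffunP => k; rewrite !ffunE.
    case: (tpermP uo t k) => [->|->|/eqP e1 /eqP e2].
    - case: eqP => [tu|/eqP tu]; first by rewrite -tu.
      rewrite eqxx; apply/esym/hb; move: tu ut; rewrite -(inj_eq val_inj) /=; lia.
    - by rewrite eqxx.
    - by rewrite (negbTE e2) (negbTE e1).
  rewrite msymM msymXn tpermL msym_mon // => k ku.
  by rewrite tpermD // -(inj_eq val_inj) /=; lia.
rewrite (bigID (fun t : 'I_n => (t < u)%N)) /= in E.
have E2 : \sum_(t : 'I_n | (b' t == false) && ~~ (t < u)%N)
     sg t *: Yv (upd b' t x) ('X_t ^+ a * mon C u e) =
   (sg uo *: Yv b (mon C u.+1 e)) *+ #|[pred t : 'I_n | ~~ (t < u)%N]|.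
  rewrite -sumr_const; apply: eq_big => t.
    rewrite inE /=; case: (ltnP t u) => [_|ut]; first by rewrite andbF.
    by rewrite hb' // eqxx.
  by move=> /andP[_]; rewrite -leqNgt; exact: Kt.
rewrite E2 in E.
have m0 : (0 < #|[pred t : 'I_n | ~~ (t < u)%N]|)%N.
  by apply/card_gt0P; exists uo; rewrite inE /= ltnn.
have MK : gen_submod (v1tensor C n)
    ((sg uo *: Yv b (mon C u.+1 e)) *+ #|[pred t : 'I_n | ~~ (t < u)%N]|).
  have -> : (sg uo *: Yv b (mon C u.+1 e)) *+ #|[pred t : 'I_n | ~~ (t < u)%N]| =
     Defs.act x false a (Yv b' (mon C u e)) - \sum_(t : 'I_n | (b' t == false) && (t < u)%N)
     sg t *: Yv (upd b' t x) ('X_t ^+ a * mon C u e).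
    by rewrite E addrC addrK.
  apply: gen_sub; first exact: gen_act (IH' b' e hb').
  apply: gen_sum => t /andP[_ tu]; apply: gen_scaleZ.
  rewrite mon_bump //; apply: IH' => k uk; rewrite ffunE.
  case: eqP => [kt|_]; last exact: hb'.
  by move: tu uk; rewrite kt; lia.
rewrite -scaler_nat scalerA in MK.
have := gen_scaleZ ((#|[pred t : 'I_n | ~~ (t < u)%N]|%:R * sg uo)^-1) MK.
rewrite scalerA mulVf ?scale1r //.
by rewrite mulf_neq0 ?signr_eq0 // Num.Theory.pnatr_eq0 -lt0n.
Qed.
Lemma decomp (C : numClosedFieldType) n (f : Vsp C n) :
  f = \sum_(b : basisIdx n) \sum_(m <- msupp (f b)) (f b)@_m *: delta b 'X_[m].
Proof.
apply/ffunP => c; rewrite sum_ffunE (bigD1 c) //= [X in _ + X]big1 => [|b bc].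
  rewrite addr0 sum_ffunE {1}(mpolyE (f c)); apply: eq_bigr => m _.
  by rewrite !ffunE eqxx.
rewrite sum_ffunE big1 // => m _.
by rewrite !ffunE eq_sym (negbTE bc) scaler0.
Qed.

Lemma X_mon (C : numClosedFieldType) n (m : 'X_{1..n}) :
  'X_[m] = mon C n (fun k => m k).
Proof. by rewrite mpolyXE_id /mon; apply: eq_bigl => k; rewrite ltn_ord. Qed.

Unset Implicit Arguments.
Theorem lemma3p10 (C : numClosedFieldType) (n : nat) (f : Vsp C n) :
  symmetric_vec f <-> gen_submod (v1tensor C n) f.
Proof.
split => [Hf | Hg]; last exact: sym_of_gen.
have Hs := sym_fix Hf.
have -> : f = (n`!%:R)^-1 *: \sum_(s : 'S_n) pact s f.
  under eq_bigr do rewrite Hs.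
  rewrite sumr_const card_Sn -scaler_nat scalerA mulVf ?scale1r //.
  by rewrite Num.Theory.pnatr_eq0 -lt0n fact_gt0.
apply: gen_scaleZ.
under eq_bigr do rewrite [X in pact _ X](decomp f) pact_sum.
rewrite exchange_big; apply: gen_sum => b _.
under eq_bigr do rewrite pact_sum.
rewrite exchange_big; apply: gen_sum => m _.
under eq_bigr do rewrite pactZ.
rewrite -scaler_sumr; apply: gen_scaleZ.
rewrite (X_mon C m); apply: (@Yv_mem C n n (leqnn n)) => k.
by rewrite leqNgt ltn_ord.
Qed.
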